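(* Let $G$ be a Gauss diagram with an over-bridge or under-bridge $v_0,v_1,\dots,v_{k+1}$ ($k\ge1$), and let $G'$ be the Gauss diagram obtained from $G$ by removing every chord having one of $v_1,\dots,v_k$ as an endpoint. Then $g(G)>g(G')$ if and only if there is a cycle of $G$ which, for some $0\le i\ne j\le k$, passes along the circle both from $v_i$ to $v_{i+1}$ and from $v_j$ to $v_{j+1}$.
   Context: A Gauss diagram is an oriented circle together with $n$ signed, oriented chords, each connecting two distinct points of the circle, all $2n$ endpoints being distinct. An over-bridge (resp. under-bridge) of length $k$ of a Gauss diagram is a sequence $v_0,\dots,v_{k+1}$ of consecutive chord endpoints along the oriented circle such that $v_1,\dots,v_k$ are all initial (resp. all terminal) points of their chords. The canonical surface $\Sigma_G$ is obtained from the annulus $S^1\times[0,1]$ by attaching, for each chord, a band to small neighborhoods of its two endpoints in $S^1\times\{0\}$ so that the result is oriented, and then capping every boundary component except $S^1\times\{1\}$ with a disk; $g(G)$ is the genus of $\Sigma_G$. A cycle in $G$ is obtained by starting at an endpoint $x$ of a chord and repeating: (i) move along the current chord to its other endpoint, (ii) move along the circle (in its orientation) to the next chord endpoint $y$, and continue from $y$, until returning to $x$ in step (ii). One has $g(G)=(n-s_G+1)/2$, $s_G$ the number of cycles ($s_G=1$ if there are no chords). *)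

(* Defs.v *)
From mathcomp Require Import all_boot all_order all_algebra.
Set Implicit Arguments. Unset Strict Implicit. Unset Printing Implicit Defensive.
Import GRing.Theory Num.Theory.

(* A Gauss diagram is encoded by its Gauss word: the list of the 2n chord
   endpoints in the order met when going once around the oriented circle
   (starting at an arbitrary base point).  An endpoint is a pair (c, b) where
   c : nat is the label of its chord and b = true iff it is the INITIAL point
   of that chord (b = false: terminal point).  Chord signs are recorded by
   gd_sign (they play no role for the genus). *)
Record gauss_diagram := GD { gd_word : seq (nat * bool); gd_sign : nat -> bool }.

Definition gauss_wf (G : gauss_diagram) : bool :=
  uniq (gd_word G) && all (fun e => (e.1, ~~ e.2) \in gd_word G) (gd_word G).

Definition npts (G : gauss_diagram) : nat := size (gd_word G).

Definition nchords (G : gauss_diagram) : nat := count (fun e => e.2) (gd_word G).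

Definition endpt (G : gauss_diagram) (i : nat) : nat * bool :=
  nth (0, true) (gd_word G) i.

Definition mate (G : gauss_diagram) (i : 'I_(npts G)) : 'I_(npts G) :=
  insubd i (index ((endpt G i).1, ~~ (endpt G i).2) (gd_word G)).

(* one full step of the cycle construction: (i) along the chord, then
   (ii) along the circle to the next endpoint *)
Definition cstep (G : gauss_diagram) (i : 'I_(npts G)) : 'I_(npts G) :=
  ordS (mate i).

(* the cycle through x, as the list of points y reached after step (ii) *)
Definition gcycle (G : gauss_diagram) (x : 'I_(npts G)) : seq 'I_(npts G) :=
  orbit (@cstep G) x.

Definition ncycles (G : gauss_diagram) : nat :=
  if npts G == 0 then 1
  else #|[set [set y in gcycle x] | x : 'I_(npts G)]|.

Definition genus (G : gauss_diagram) : rat :=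
  ((nchords G)%:R - (ncycles G)%:R + 1) / 2.

(* the cycle C passes along the circle from position a to the next endpoint:
   some step (i) of C ends at a (and step (ii) then moves from a onwards) *)
Definition passes_from (G : gauss_diagram) (C : seq 'I_(npts G)) (a : nat) : Prop :=
  exists2 y, y \in C & nat_of_ord (mate y) = a.

Definition vpos (G : gauss_diagram) (p t : nat) : nat := (p + t) %% npts G.

(* v_0,...,v_{k+1} (starting at position p < 2n) is an over-bridge (b = true)
   or an under-bridge (b = false) of length k *)
Definition is_bridge (G : gauss_diagram) (b : bool) (p k : nat) : Prop :=
  p < npts G /\ forall t, 1 <= t <= k -> (endpt G (vpos G p t)).2 = b.

Definition remove_bridge_chords (G : gauss_diagram) (p k : nat) : gauss_diagram :=
  let L := [seq (endpt G (vpos G p t)).1 | t <- iota 1 k] in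
  GD [seq e <- gd_word G | e.1 \notin L] (gd_sign G).

(* Main.v *)
Require Import Defs.
From mathcomp Require Import all_boot all_order all_algebra.
Import GRing.Theory Num.Theory.
From mathcomp Require Import all_fingroup.
From mathcomp Require Import zify lra.
Set Implicit Arguments. Unset Strict Implicit. Unset Printing Implicit Defensive.

Section CoreSec.
Local Open Scope group_scope.
Variable T : finType.
Implicit Types (s : {perm T}) (a b c x y : T).

Lemma po_sym s a b : (b \in porbit s a) = (a \in porbit s b).
Proof. exact: porbit_sym. Qed.

Lemma po_trans s a b c : b \in porbit s a -> c \in porbit s b -> c \in porbit s a.
Proof.
rewrite -!eq_porbit_mem => /eqP <- /eqP ->; by [].
Qed.

Lemma po_step s a b : b \in porbit s a -> s b \in porbit s a.
Proof.
move=> H; apply: po_trans H _; by rewrite -{1}(expg1 s) mem_porbit.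
Qed.

Lemma porbit_fix s x y z : x \notin porbit s z -> y \notin porbit s z ->
  porbit (tperm x y * s) z = porbit s z.
Proof.
move=> Hx Hy.
have E n : ((tperm x y * s) ^+ n) z = (s ^+ n) z.
  elim: n => // n IH; rewrite !expgSr !permM IH tpermD //.
    by apply: contraNneq Hx => ->; apply: mem_porbit.
  by apply: contraNneq Hy => ->; apply: mem_porbit.
by apply/setP => u; apply/porbitP/porbitP => -[i ->]; exists i; rewrite E.
Qed.

Lemma po_tperm_sub s x y a b : b \in porbit (tperm x y * s) a ->
  b \in porbit s a \/ ((x \in porbit s a \/ y \in porbit s a) /\
                       (x \in porbit s b \/ y \in porbit s b)).
Proof.
move=> H.
case Ha: ((x \in porbit s a) || (y \in porbit s a)); last first.
  move/negbT: Ha; rewrite negb_or => /andP[h1 h2].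
  by left; rewrite -(porbit_fix h1 h2).
case Hb: ((x \in porbit s b) || (y \in porbit s b)).
  by right; split; apply/orP.
move/negbT: Hb; rewrite negb_or => /andP[h1 h2].
left; rewrite po_sym -(porbit_fix h1 h2) -po_sym //.
Qed.

Lemma cnt_tperm s x y : x != y ->
  #|porbits (tperm x y * s)| + (x \notin porbit s y).*2 = #|porbits s| + 1.
Proof. by move=> nxy; rewrite porbits_mul_tperm nxy. Qed.

Lemma merge_tperm s x y : x != y -> x \notin porbit s y ->
  (forall a b, b \in porbit s a -> b \in porbit (tperm x y * s) a) /\
  x \in porbit (tperm x y * s) y.
Proof.
move=> nxy nin; set u := tperm x y * s.
have su : s = tperm x y * u by rewrite /u mulgA tperm2 mul1g.
have Hxy : x \in porbit u y.
  apply/negPn/negP => H.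
  have h1 := cnt_tperm s nxy; have h2 := cnt_tperm u nxy.
  rewrite -su in h2; rewrite -/u nin in h1; rewrite H in h2.
  move: h1 h2; rewrite /=; lia.
split => // a b Hab; rewrite su in Hab.
case: (po_tperm_sub Hab) => [//|[Ha Hb]].
have Hyx : y \in porbit u x by rewrite po_sym.
have Ha' : x \in porbit u a by case: Ha => // h; apply: (po_trans h Hxy).
have Hb' : x \in porbit u b by case: Hb => // h; apply: (po_trans h Hxy).
by apply: po_trans Ha' _; rewrite po_sym.
Qed.

Variables (sg : {perm T}) (v w : nat -> T) (k : nat).
Fixpoint sig m := if m is m'.+1 then tperm (v m) (w m) * sig m' else sg.
Hypothesis vw : forall m, m < k -> v m.+1 != w m.+1.
Hypothesis sw : forall m, m < k -> sig m (w m.+1) = v m.+2.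
Definition splitp m := v m.+1 \in porbit (sig m) (w m.+1).

Lemma count_sig m : m <= k ->
  #|porbits (sig m)| + m = #|porbits sg| + (2 * count splitp (iota 0 m))%N.
Proof.
elim: m => [|m IH] Hm; first by rewrite /=; lia.
rewrite -addn1 iotaD count_cat /= addn0 addn1.
have := cnt_tperm (sig m) (vw Hm); rewrite -/(sig m.+1) /splitp.
have := IH (ltnW Hm); rewrite /= /splitp; case: (v m.+1 \in _) => /=; move=> h1 h2; rewrite -muln2 in h2; lia.
Qed.

Lemma core_count :
  (#|porbits sg| < #|porbits (sig k)| + k) <-> exists2 m, m < k & splitp m.
Proof.
rewrite count_sig //; split.
  move=> H; have : 0 < count splitp (iota 0 k) by lia.
  rewrite -has_count => /hasP[m]; rewrite mem_iota => /andP[_ Hm] Hs.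
  by exists m.
move=> [m Hm Hs]; have : 0 < count splitp (iota 0 k).
  by rewrite -has_count; apply/hasP; exists m; rewrite // mem_iota.
lia.
Qed.

Lemma sig_w m : m < k -> v m.+2 \in porbit (sig m) (w m.+1).
Proof. by move=> Hm; rewrite -sw //; apply: po_step; apply: porbit_id. Qed.

Lemma invI m : m <= k -> forall a b, b \in porbit (sig m) a ->
  b \in porbit sg a \/
  ((exists i, 1 <= i <= m.+1 /\ v i \in porbit sg a) /\
   (exists j, 1 <= j <= m.+1 /\ v j \in porbit sg b)).
Proof.
elim: m => [|m IH] Hm a b H; first by left.
have Hm' : m < k by [].
have IH' := IH (ltnW Hm).
have Hc : forall c, (v m.+1 \in porbit (sig m) c \/ w m.+1 \in porbit (sig m) c) ->
    exists i, 1 <= i <= m.+2 /\ v i \in porbit sg c.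
  move=> c [hc|hc].
    case: (IH' _ _ hc) => [h|[[i [hi1 hi2]] _]].
      by exists m.+1; split => //; lia.
    by exists i; split => //; lia.
  have hc2 := po_trans hc (sig_w Hm').
  case: (IH' _ _ hc2) => [h|[[i [hi1 hi2]] _]].
    by exists m.+2; split => //; lia.
  by exists i; split => //; lia.
case: (po_tperm_sub H) => [h|[ha hb]].
  case: (IH' _ _ h) => [h'|[[i [hi1 hi2]] [j [hj1 hj2]]]]; first by left.
  by right; split; [exists i | exists j]; split => //; lia.
by right; split; apply: Hc.
Qed.

Lemma invJ (ns : forall m, m < k -> ~ splitp m) m : m <= k ->
  (forall a b, b \in porbit sg a -> b \in porbit (sig m) a) /\
  (forall i, 1 <= i <= m.+1 -> v i \in porbit (sig m) (v 1)).
Proof.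
elim: m => [|m IH] Hm.
  split => // i Hi; have -> : i = 1%N by lia. exact: porbit_id.
have Hm' : m < k by [].
have [IH1 IH2] := IH (ltnW Hm).
have nsp : v m.+1 \notin porbit (sig m) (w m.+1) by apply/negP; apply: ns.
have [M1 M2] := merge_tperm (vw Hm') nsp.
rewrite /= -/(sig m) in M1 M2 *.
split; first by move=> a b h; apply: M1; apply: IH1.
move=> i Hi; case: (ltnP i m.+2) => Hi2.
  by apply: M1; apply: IH2; lia.
have -> : i = m.+2 by lia.
have h1 : v m.+2 \in porbit (tperm (v m.+1) (w m.+1) * sig m) (w m.+1).
  by apply: M1; apply: sig_w.
have h2 : v m.+1 \in porbit (tperm (v m.+1) (w m.+1) * sig m) (v 1).
  by apply: M1; apply: IH2; lia.
apply: po_trans h2 _; apply: po_trans _ h1; by rewrite po_sym.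
Qed.

Lemma core_split :
  (exists2 m, m < k & splitp m) <->
  (exists i j, [/\ 1 <= i, i < j, j <= k.+1 & v j \in porbit sg (v i)]).
Proof.
split.
  move=> [m Hm Hs].
  have h : v m.+2 \in porbit (sig m) (v m.+1).
    by apply: po_trans (sig_w Hm); rewrite po_sym.
  case: (invI (ltnW Hm) h) => [h'|[_ [j [hj1 hj2]]]].
    by exists m.+1, m.+2; split => //; lia.
  by exists j, m.+2; split => //; try lia; rewrite po_sym.
move=> [i [j [hi hij hj hv]]].
case Hh: (has splitp (iota 0 k)).
  by move/hasP: Hh => [m]; rewrite mem_iota => /andP[_ Hm] Hs; exists m.
have ns : forall m, m < k -> ~ splitp m.
  move=> m Hm Hs; move/negbT/hasPn: Hh => /(_ m); rewrite mem_iota Hs; lia.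
have Hm : j.-2 < k by lia.
have [J1 J2] := invJ ns (ltnW Hm).
exfalso; apply: (ns _ Hm); rewrite /splitp.
have Ej : j.-2.+2 = j by lia.
have h1 := sig_w Hm; rewrite Ej in h1.
have h2 : v j \in porbit (sig j.-2) (v i) by apply: J1.
have h3 : v i \in porbit (sig j.-2) (v 1%N) by apply: J2; lia.
have h4 : v j.-2.+1 \in porbit (sig j.-2) (v 1%N) by apply: J2; lia.
rewrite po_sym in h4.
apply: (po_trans h1); rewrite po_sym; apply: (po_trans h4).
exact: (po_trans h3 h2).
Qed.
End CoreSec.

Section Gen.
Variable G : gauss_diagram.
Hypothesis wf : gauss_wf G.
Local Notation w := (gd_word G).
Local Notation N := (npts G).

Definition partner (e : nat * bool) := (e.1, ~~ e.2).

Lemma uniqw : uniq w. Proof. by case/andP: wf. Qed.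
Lemma partner_in e : e \in w -> partner e \in w.
Proof. by case/andP: wf => _ /allP H /H. Qed.

Lemma endpt_in (x : 'I_N) : endpt G x \in w.
Proof. exact: mem_nth. Qed.

Lemma endpt_inj (x y : 'I_N) : endpt G x = endpt G y -> x = y.
Proof.
move=> E; apply: val_inj => /=; apply/eqP.
by rewrite -(nth_uniq (0, true) (ltn_ord x) (ltn_ord y) uniqw); apply/eqP.
Qed.

Lemma mate_val (x : 'I_N) : val (mate x) = index (partner (endpt G x)) w.
Proof.
rewrite /mate /insubd insubT // index_mem; exact/partner_in/endpt_in.
Qed.

Lemma endpt_mate (x : 'I_N) : endpt G (mate x) = partner (endpt G x).
Proof. by rewrite /endpt mate_val nth_index //; apply/partner_in/endpt_in. Qed.

Lemma mateK (x : 'I_N) : mate (mate x) = x.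
Proof.
apply: endpt_inj; rewrite !endpt_mate /partner negbK; by case: (endpt G x).
Qed.

Lemma mate_neq (x : 'I_N) : mate x != x.
Proof.
apply/eqP => E; have := endpt_mate x; rewrite E /partner.
by case: (endpt G x) => a [] [].
Qed.

Lemma cstep_inj : injective (@cstep G).
Proof.
move=> x y; rewrite /cstep => /ordS_inj E.
by rewrite -(mateK x) E mateK.
Qed.

Definition sgm : {perm 'I_N} := perm cstep_inj.

Lemma sgmE x : sgm x = ordS (mate x). Proof. by rewrite permE. Qed.

Lemma orbE (x y : 'I_N) : (y \in fingraph.orbit (@cstep G) x) = (y \in porbit sgm x).
Proof.
rewrite -fconnect_orbit; apply/idP/porbitP.
  move=> /iter_findex <-; exists (findex (@cstep G) x y).
  by rewrite permX; apply: eq_iter => z; rewrite permE.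
move=> [i ->]; rewrite permX (eq_iter (f' := @cstep G)); last by move=> z; rewrite permE.
exact: fconnect_iter.
Qed.

Lemma ncyclesE' : 0 < N -> ncycles G = #|[set porbit sgm x | x : 'I_N]|.
Proof.
move=> N0; rewrite /ncycles; have -> : (N == 0) = false by lia.
apply: eq_card => S; apply/imsetP/imsetP => -[x _ ->]; exists x => //;
  apply/setP => y; by rewrite inE /gcycle orbE.
Qed.
Lemma porbitsE : porbits sgm = [set porbit sgm x | x : 'I_N].
Proof. by []. Qed.
End Gen.

Lemma leqcard (T aT bT : finType) (A : T -> aT) (B : T -> bT) :
  (forall x y, A x = A y -> B x = B y) -> #|[set B x | x : T]| <= #|[set A x | x : T]|.
Proof.
move=> H; case: (pickP T) => [x0 _ | none]; last first.
  rewrite (_ : [set B x | x : T] = set0) ?cards0 //.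
  by apply/setP => S; rewrite inE; apply/imsetP => -[x]; by have := none x.
pose g a := B (odflt x0 [pick x | A x == a]).
have E : [set B x | x : T] = [set g x | x in [set A x | x : T]].
  rewrite -imset_comp; apply: eq_imset => x /=; rewrite /g.
  case: pickP => [y /eqP hy | hn] /=; first by rewrite (H _ _ hy).
  by have := hn x; rewrite eqxx.
rewrite E; exact: leq_imset_card.
Qed.

Lemma eqcard (T aT bT : finType) (A : T -> aT) (B : T -> bT) :
  (forall x y, (A x == A y) = (B x == B y)) -> #|[set A x | x : T]| = #|[set B x | x : T]|.
Proof.
move=> H; apply/eqP; rewrite eqn_leq; apply/andP; split; apply: leqcard => x y E;
  apply/eqP; [rewrite H | rewrite -H]; exact/eqP.
Qed.

Section Bridge.
Variable G : gauss_diagram.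
Hypothesis wf : gauss_wf G.
Variables (b : bool) (p k : nat).
Hypothesis k1 : 1 <= k.
Hypothesis hb : is_bridge G b p k.
Local Notation w := (gd_word G).
Local Notation N := (npts G).

Definition lab (x : 'I_N) := (endpt G x).1.

Lemma N0 : 0 < N. Proof. by case: hb => h _; lia. Qed.
Lemma vlt t : vpos G p t < N. Proof. exact: ltn_pmod N0. Qed.
Definition v t : 'I_N := Ordinal (vlt t).
Definition wv t := mate (v t).
Definition Lm m := [seq (endpt G (vpos G p t)).1 | t <- iota 1 m].
Local Notation L := (Lm k).

Lemma v_bool t : 1 <= t <= k -> (endpt G (v t)).2 = b.
Proof. by case: hb => _ H /H. Qed.

Lemma ordS_v t : ordS (v t) = v t.+1.
Proof.
apply: val_inj => /=; rewrite /vpos -addn1 modnDml addn1 addnS //.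
Qed.

Lemma vval t : val (v t) = (p + t) %% N. Proof. by []. Qed.

Lemma k_lt_N : k < N.
Proof.
case: (ltnP k N) => // kN; exfalso.
have hp : p < N by case: hb.
set e := endpt G (v 1).
have Hin : partner e \in w by apply/partner_in/endpt_in.
set q := index (partner e) w.
have qN : q < N by rewrite index_mem.
set t := ((q + N - p.+1) %% N).+1.
have tN : t <= N by rewrite /t; have := ltn_pmod (q + N - p.+1) N0; lia.
have Evt : vpos G p t = q.
  rewrite /vpos /t addnS -addSn modnDmr.
  have -> : p.+1 + (q + N - p.+1) = q + N by lia.
  by rewrite modnDr modn_small.
have := v_bool (t := t); rewrite /t; move=> /(_ ltac:(lia)).
rewrite /endpt /= -/t Evt /q nth_index // /partner /= /e v_bool //; by case: b.
Qed.

Lemma v_inj s t : s < N -> t < N -> v s = v t -> s = t.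
Proof.
move=> sN tN /(congr1 val) /=; rewrite /vpos => /eqP.
by rewrite eqn_modDl !modn_small // => /eqP.
Qed.

Lemma lab_v_inj s t : 1 <= s <= k -> 1 <= t <= k -> lab (v s) = lab (v t) -> s = t.
Proof.
move=> hs ht E; apply: v_inj; try (have := k_lt_N; lia).
apply: endpt_inj => //; rewrite [endpt G (v s)]surjective_pairing [endpt G (v t)]surjective_pairing.
by move: E; rewrite /lab => ->; rewrite !v_bool.
Qed.

Lemma lab_wv t : lab (wv t) = lab (v t).
Proof. by rewrite /lab /wv (endpt_mate wf). Qed.

Lemma lab_eq x t : lab x = lab (v t) -> x = v t \/ x = wv t.
Proof.
rewrite /lab => E.
case Eb: ((endpt G x).2 == (endpt G (v t)).2).
  left; apply: (endpt_inj wf).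
  by rewrite [endpt G x]surjective_pairing [endpt G (v t)]surjective_pairing (eqP Eb) -E.
right; apply: (endpt_inj wf); rewrite /wv (endpt_mate wf) /partner.
move: E Eb; case: (endpt G x) => a c; case: (endpt G (v t)) => a' c' /= -> .
by case: c; case: c'.
Qed.

Lemma mem_Lm m x : reflect (exists2 t, 1 <= t <= m & lab x = lab (v t)) (lab x \in Lm m).
Proof.
apply: (iffP mapP) => -[t ht E]; exists t => //; move: ht; rewrite ?mem_iota; lia.
Qed.

Lemma Lm_S m : Lm m.+1 = rcons (Lm m) (lab (v m.+1)).
Proof. by rewrite /Lm -[m.+1]addn1 iotaD map_cat cats1 /= addnC. Qed.

Lemma notin_Lm m : m < k -> lab (v m.+1) \notin Lm m.
Proof.
move=> hm; apply/mem_Lm => -[t ht E].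
have := lab_v_inj (s := m.+1) (t := t); move=> /(_ ltac:(lia) ltac:(lia) E); lia.
Qed.

Local Notation sg := (sgm wf).
Local Notation sigm := (sig sg v wv).

Lemma sig_char m : m <= k -> forall x,
  sigm m x = if lab x \in Lm m then ordS x else sg x.
Proof.
elim: m => [|m IH] hm x; first by [].
have hm' : m < k by [].
rewrite /= permM Lm_S mem_rcons in_cons.
have nv := notin_Lm hm'.
case: tpermP => [->|->|n1 n2].
- rewrite IH ?(ltnW hm) // lab_wv (negbTE nv) eqxx /= (sgmE wf) /wv (mateK wf) //.
- rewrite IH ?(ltnW hm) // (negbTE nv) lab_wv eqxx /= (sgmE wf) //.
- rewrite IH ?(ltnW hm) //.
  case: eqP => [E|_ //]; by case: (lab_eq E).
Qed.

Lemma hyp_vw m : m < k -> v m.+1 != wv m.+1.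
Proof. by move=> _; rewrite eq_sym /wv (mate_neq wf). Qed.

Lemma hyp_sw m : m < k -> sigm m (wv m.+1) = v m.+2.
Proof.
move=> hm; rewrite sig_char ?(ltnW hm) // lab_wv (negbTE (notin_Lm hm)).
by rewrite (sgmE wf) /wv (mateK wf) ordS_v.
Qed.

Definition keepn (q : nat) := (nth (0, true) w q).1 \notin L.
Definition idx := [seq i <- iota 0 N | keepn i].
Local Notation G' := (remove_bridge_chords G p k).

Lemma wG' : gd_word G' = map (nth (0, true) w) idx.
Proof.
rewrite /= /idx.
have E : [seq nth (0, true) w i | i <- iota 0 N] = w by apply: (mkseq_nth (0, true) w).
rewrite -{1}E filter_map; by [].
Qed.

Lemma size_idx : size idx = npts G'.
Proof. by rewrite /npts wG' size_map. Qed.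

Definition io (y : nat) := nth 0 idx y.

Lemma io_in y : y < size idx -> io y \in idx.
Proof. exact: mem_nth. Qed.

Lemma io_lt y : y < size idx -> io y < N.
Proof. by move/io_in; rewrite mem_filter mem_iota => /andP[_ /andP[_ ]]. Qed.

Lemma io_keep y : y < size idx -> keepn (io y).
Proof. by move/io_in; rewrite mem_filter => /andP[]. Qed.

Lemma idx_sorted : sorted ltn idx.
Proof. apply: sorted_filter; [exact: ltn_trans | exact: iota_ltn_sorted]. Qed.

Lemma io_mono i j : i < size idx -> j < size idx -> i < j -> io i < io j.
Proof. move=> hi hj; exact: (sorted_ltn_nth ltn_trans 0 idx_sorted). Qed.

Lemma io_leq i j : i < size idx -> j < size idx -> i <= j -> io i <= io j.
Proof.
move=> hi hj; rewrite leq_eqVlt => /orP[/eqP ->//|h].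
exact/ltnW/io_mono.
Qed.

Lemma keep_io q : q < N -> keepn q -> exists2 i, i < size idx & io i = q.
Proof.
move=> hq hk; have qi : q \in idx by rewrite mem_filter hk mem_iota.
by exists (index q idx); [rewrite index_mem | rewrite /io nth_index].
Qed.

Lemma io_inj i j : i < size idx -> j < size idx -> io i = io j -> i = j.
Proof.
move=> hi hj E; case: (ltngtP i j) => // h.
  by have := io_mono hi hj h; rewrite E ltnn.
by have := io_mono hj hi h; rewrite E ltnn.
Qed.

Lemma io_lt' (y : 'I_(npts G')) : io y < N.
Proof. by apply: io_lt; rewrite size_idx. Qed.

Definition iot (y : 'I_(npts G')) : 'I_N := Ordinal (io_lt' y).

Lemma endptG' (y : 'I_(npts G')) : endpt G' y = endpt G (iot y).
Proof.
by rewrite /endpt wG' (nth_map 0) // size_idx.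
Qed.

Lemma wf' : gauss_wf G'.
Proof.
apply/andP; split; first by apply: filter_uniq; exact: uniqw.
apply/allP => e; rewrite /= !mem_filter => /andP[h1 h2]; rewrite h1 /=.
exact: (partner_in wf h2).
Qed.

Lemma mate' (y : 'I_(npts G')) : iot (mate y) = mate (iot y).
Proof.
apply: (endpt_inj wf); rewrite -endptG' (endpt_mate wf') (endpt_mate wf).
by rewrite endptG'.
Qed.

Lemma iot_inj : injective iot.
Proof.
move=> x y /(congr1 val) /= E; apply: val_inj.
by apply: (io_inj _ _ E); rewrite size_idx.
Qed.

Lemma next_io (u : 'I_(npts G')) : exists2 j, 0 < j &
  val (iot (ordS u)) = (io u + j) %% N /\
  forall l, 0 < l < j -> ~~ keepn ((io u + l) %% N).
Proof.
have hu : u < size idx by rewrite size_idx.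
have ioN := io_lt hu.
case: (ltnP u.+1 (npts G')) => h.
- have Eo : nat_of_ord (ordS u) = u.+1 by rewrite /= modn_small.
  have hu1 : u.+1 < size idx by rewrite size_idx.
  have lt := io_mono hu hu1 (ltnSn u).
  have io1N := io_lt hu1.
  exists (io u.+1 - io u); first lia.
  split.
    change (io (ordS u) = (io u + (io u.+1 - io u)) %% N); rewrite Eo.
    have -> : io u + (io u.+1 - io u) = io u.+1 by lia.
    by rewrite modn_small.
  move=> l hl; have -> : (io u + l) %% N = io u + l by rewrite modn_small //; lia.
  apply/negP => hk; have [i hi Ei] := keep_io (ltac:(lia) : io u + l < N) hk.
  case: (leqP i u) => hiu.
    by have := io_leq hi hu hiu; lia.
  by have := io_leq hu1 hi hiu; lia.
- have Eu : u.+1 = npts G' by have := ltn_ord u; lia.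
  have Eo : nat_of_ord (ordS u) = 0 by rewrite /= Eu modnn.
  have h0 : 0 < size idx by rewrite size_idx; lia.
  have io0N := io_lt h0.
  exists (N - io u + io 0); first lia.
  split.
    change (io (ordS u) = (io u + (N - io u + io 0)) %% N); rewrite Eo.
    have -> : io u + (N - io u + io 0) = io 0 + N by lia.
    by rewrite modnDr modn_small.
  move=> l hl; apply/negP => hk.
  case: (ltnP (io u + l) N) => hN.
    rewrite modn_small // in hk; have [i hi Ei] := keep_io hN hk.
    have hiu : i <= u by rewrite size_idx in hi; lia.
    by have := io_leq hi hu hiu; lia.
  have E : (io u + l) %% N = io u + l - N.
    by rewrite -{1}(subnK hN) modnDr modn_small //; lia.
  rewrite E in hk; have [i hi Ei] := keep_io (ltac:(lia) : io u + l - N < N) hk.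
  by have := io_leq h0 hi (leq0n i); lia.
Qed.

Definition pi := sigm k.

Lemma pi_char x : pi x = if lab x \in L then ordS x else sg x.
Proof. exact: sig_char. Qed.

Lemma nkeep (x : 'I_N) : ~~ keepn x -> pi x = ordS x.
Proof. by rewrite pi_char /keepn /lab /endpt negbK => ->. Qed.

Lemma ykeep (x : 'I_N) : keepn x -> pi x = sg x.
Proof. by rewrite pi_char /keepn /lab /endpt => /negbTE ->. Qed.

Lemma walk (x : 'I_N) l : (forall l', l' < l -> ~~ keepn ((x + l') %% N)) ->
  val ((pi ^+ l)%g x) = (x + l) %% N.
Proof.
elim: l => [|l IH] H; first by rewrite expg0 perm1 addn0 modn_small.
have IH' : val ((pi ^+ l)%g x) = (x + l) %% N by apply: IH => l' hl; apply: H; lia.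
rewrite expgSr permM nkeep; last by rewrite IH'; apply: H.
by rewrite /= IH' -addn1 modnDml addn1 addnS.
Qed.

Lemma first_ret (z : 'I_(npts G')) : exists2 j, 0 < j &
  (pi ^+ j)%g (iot z) = iot (cstep z) /\
  forall l, 0 < l < j -> ~~ keepn ((pi ^+ l)%g (iot z)).
Proof.
have [j j0 [Ej Hl]] := next_io (mate z).
have kz : keepn (iot z) by apply: io_keep; rewrite size_idx.
set x1 := pi (iot z).
have Ex1 : val x1 = (io (mate z) + 1) %% N.
  rewrite /x1 ykeep // (sgmE wf) -mate' /=; by rewrite addn1.
have W : forall l, l < j -> val ((pi ^+ l.+1)%g (iot z)) = (io (mate z) + l.+1) %% N.
  move=> l hl; rewrite expgS permM -/x1 walk.
    by rewrite Ex1 modnDml -addnA add1n.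
  move=> l' hl'; rewrite Ex1 modnDml -addnA add1n; apply: Hl; lia.
exists j => //; split.
  apply: val_inj; rewrite /cstep Ej -(prednK j0) W //; lia.
move=> l hl; have := W l.-1 ltac:(lia); rewrite (prednK (ltac:(lia) : 0 < l)) => ->.
by apply: Hl.
Qed.

Lemma kl_fwd n (x' : 'I_(npts G')) :
  iot (iter n (@cstep G') x') \in porbit pi (iot x').
Proof.
elim: n => [|n IH]; first exact: porbit_id.
rewrite iterS; have [j _ [Ej _]] := first_ret (iter n (@cstep G') x').
rewrite -Ej; apply: (po_trans IH); exact: mem_porbit.
Qed.

Lemma kl_bwd n : forall m, m <= n -> forall x' y' : 'I_(npts G'),
  iot y' = (pi ^+ m)%g (iot x') -> fconnect (@cstep G') x' y'.
Proof.
elim: n => [|n IH] m hm x' y' E.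
  have m0 : m = 0 by lia.
  rewrite m0 expg0 perm1 in E; rewrite (iot_inj E); exact: connect0.
case: m hm E => [|m] hm E.
  rewrite expg0 perm1 in E; rewrite (iot_inj E); exact: connect0.
have [j j0 [Ej Hl]] := first_ret x'.
case: (ltnP m.+1 j) => hj.
  exfalso; have := Hl m.+1 ltac:(lia); rewrite -E io_keep //; by rewrite size_idx.
have E2 : iot y' = (pi ^+ (m.+1 - j))%g (iot (cstep x')).
  by rewrite -Ej -permM -expgD subnKC.
apply: connect_trans (fconnect1 _ x') (IH _ _ _ _ E2); lia.
Qed.

Lemma kl (x' y' : 'I_(npts G')) :
  fconnect (@cstep G') x' y' = (iot y' \in porbit pi (iot x')).
Proof.
apply/idP/idP; first by move/iter_findex <-; apply: kl_fwd.
by move/porbitP => [m E]; apply: (kl_bwd (leqnn m) E).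
Qed.

Lemma surj_iot : 0 < npts G' -> forall x : 'I_N,
  exists x', porbit pi x = porbit pi (iot x').
Proof.
move=> hG x; have h0 : 0 < size idx by rewrite size_idx.
have q0N := io_lt h0; have q0k := io_keep h0.
have exP : exists l, keepn ((x + l) %% N).
  exists ((io 0 + N - x) %% N); rewrite modnDmr.
  have -> : x + (io 0 + N - x) = io 0 + N by have := ltn_ord x; lia.
  by rewrite modnDr modn_small.
case: (ex_minnP exP) => l Pl Hmin.
have W := @walk x l.
have Wl : val ((pi ^+ l)%g x) = (x + l) %% N.
  apply: W => l' hl'; apply/negP => hk; have := Hmin _ hk; lia.
have [i hi Ei] := keep_io (ltn_pmod _ N0) Pl.
have hi' : i < npts G' by rewrite -size_idx.
exists (Ordinal hi'); rewrite -(porbit_perm pi l x); congr porbit.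
by apply: val_inj; rewrite Wl /= Ei.
Qed.

Lemma ncyclesG' : ncycles G' = #|porbits pi|.
Proof.
have -> : porbits pi = [set porbit pi x | x : 'I_N] by [].
rewrite /ncycles; case: eqP => hG.
- have nk : forall q, q < N -> ~~ keepn q.
    move=> q hq; apply/negP => hk; have [i hi _] := keep_io hq hk.
    by rewrite size_idx hG in hi.
  set x0 : 'I_N := Ordinal N0.
  have E : forall x : 'I_N, porbit pi x = porbit pi x0.
    move=> x; rewrite -(porbit_perm pi x x0); congr porbit; apply: val_inj.
    rewrite walk /= ?add0n ?modn_small //.
    by move=> l' _; apply: nk; apply: ltn_pmod N0.
  rewrite (_ : [set porbit pi x | x : 'I_N] = [set porbit pi x0]) ?cards1 //.
  apply/setP => S; rewrite inE; apply/imsetP/eqP => [[x _ ->]|->]; first exact: E.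
  by exists x0.
- have hG' : 0 < npts G' by lia.
  have cinj := cstep_inj wf'.
  have -> : [set porbit pi x | x : 'I_N] = [set porbit pi (iot x') | x' : 'I_(npts G')].
    apply/setP => S; apply/imsetP/imsetP => -[x _ ->].
      by have [x' E] := surj_iot hG' x; exists x'.
    by exists (iot x).
  apply: eqcard => x y.
  rewrite eq_porbit_mem -kl; apply/eqP/idP.
    move=> E; have : x \in [set z in gcycle y] by rewrite -E inE /gcycle -fconnect_orbit connect0.
    by rewrite inE /gcycle -fconnect_orbit.
  move=> hyx; apply/setP => z; rewrite !inE /gcycle -!fconnect_orbit.
  apply/idP/idP => h; first exact: connect_trans hyx h.
  by rewrite fconnect_sym // in hyx; exact: connect_trans hyx h.
Qed.

Lemma L_uniq : uniq L.
Proof.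
rewrite /Lm map_inj_in_uniq ?iota_uniq // => s t; rewrite !mem_iota => hs ht E.
by apply: lab_v_inj => //; lia.
Qed.

Lemma count_split (T : Type) (a c : pred T) s :
  count a s = count (fun x => a x && c x) s + count (fun x => a x && ~~ c x) s.
Proof. elim: s => //= x s ->; case: (a x); case: (c x) => /=; lia. Qed.

Lemma nchordsG' : nchords G' + k = nchords G.
Proof.
rewrite /nchords /= count_filter (count_split (fun e : nat * bool => e.2) (fun e => e.1 \notin L)).
congr (_ + _); rewrite -size_filter.
have memS : forall e : nat * bool, (e \in [seq (l, true) | l <- L]) = (e.2 && (e.1 \in L)).
  case=> l c; apply/mapP/idP => [[l' hl [-> ->]] //=|/andP[/= -> hl]]; by exists l.
have inw : forall l, l \in L -> (l, true) \in w.
  move=> l /mapP[t ht ->]; have h1 := endpt_in (v t); have h2 := partner_in wf h1.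
  move: h1 h2; rewrite /partner /=; by case: (endpt G (vpos G p t)) => a [].
have P : perm_eq [seq e <- w | e.2 && ~~ (e.1 \notin L)] [seq (l, true) | l <- L].
  apply: uniq_perm.
  - exact/filter_uniq/(uniqw wf).
  - by rewrite map_inj_uniq ?L_uniq // => l1 l2 [].
  - move=> e; rewrite mem_filter memS negbK; case: e => l c /=.
    case: c => //=; case hl: (l \in L) => //=; by rewrite inw.
by rewrite (perm_size P) size_map size_map size_iota.
Qed.

Lemma pf (x : 'I_N) i :
  passes_from (gcycle x) (vpos G p i) <-> v i.+1 \in porbit sg x.
Proof.
split.
  move=> [y hy hm]; have Em : mate y = v i by apply: val_inj.
  rewrite /gcycle (orbE wf) in hy; have := po_step hy.
  by rewrite (sgmE wf) Em ordS_v.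
move=> h; exists (mate (v i)); last by rewrite (mateK wf).
have E : sg (mate (v i)) = v i.+1 by rewrite (sgmE wf) (mateK wf) ordS_v.
rewrite /gcycle (orbE wf); apply: (po_trans h); rewrite po_sym -E.
by apply: po_step; apply: porbit_id.
Qed.

End Bridge.

Unset Implicit Arguments.

Lemma rat_ineq (a c C kk : nat) :
  ((a%:R - c%:R + 1) / 2 < ((a + kk)%:R - C%:R + 1) / 2 :> rat)%R = (C < c + kk)%N.
Proof.
rewrite -(ltr_nat rat) !natrD; apply/idP/idP => h; lra.
Qed.

Theorem mainTheorem7 (G : gauss_diagram) (b : bool) (p k : nat) :
  gauss_wf G -> 1 <= k -> is_bridge G b p k ->
  (genus (remove_bridge_chords G p k) < genus G)%R <->
  exists x : 'I_(npts G), exists i j : nat,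
    [/\ i != j, i <= k, j <= k,
        passes_from (gcycle x) (vpos G p i) & passes_from (gcycle x) (vpos G p j)].
Proof.
move=> wf k1 hb.
have N0' := N0 wf k1 hb.
rewrite /genus -(nchordsG' wf k1 hb) (ncyclesG' wf k1 hb) (ncyclesE' wf N0') -porbitsE rat_ineq.
have CC := core_count (sgm wf) (hyp_vw wf k1 hb).
have CS := core_split (hyp_vw wf k1 hb) (hyp_sw wf k1 hb).
rewrite /pi in CC *.
rewrite CC CS; split.
  move=> [i [j [hi hij hj hv]]].
  exists (v wf k1 hb i), i.-1, j.-1; split; try lia.
    by apply/(pf wf k1 hb); rewrite (prednK hi); apply: porbit_id.
  by apply/(pf wf k1 hb); rewrite (prednK (ltac:(lia) : 0 < j)).
move=> [x [i [j [hij hi hj /(pf wf k1 hb) h1 /(pf wf k1 hb) h2]]]].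
case: (ltngtP i j) => hc; last by rewrite hc eqxx in hij.
  exists i.+1, j.+1; split; try lia.
  by apply: (po_trans _ h2); rewrite po_sym.
exists j.+1, i.+1; split; try lia.
by apply: (po_trans _ h1); rewrite po_sym.
Qed.
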